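(* Let $A,B:\mathbb{R}^n\to\mathbb{R}^n$ be linear operators that are GTP with respect to a totally positive structure $\{K_1,\ldots,K_n\}$. Then $AB$ is GTP with respect to $\{K_1,\ldots,K_n\}$. If moreover one of $A$, $B$ is GSTP and the other is nonsingular (and GTP), then $AB$ is GSTP with respect to $\{K_1,\ldots,K_n\}$. In particular, if $A$ is GTP (respectively, GSTP) with respect to $\{K_1,\ldots,K_n\}$, then $A^m$ is GTP (respectively, GSTP) with respect to the same structure for every natural number $m$.
   Context: A proper cone is a closed convex cone that is pointed and solid. $\wedge^j\mathbb{R}^n$ is the $j$th exterior power of $\mathbb{R}^n$ and $\wedge^jA$ the operator with $(\wedge^jA)(x_1\wedge\cdots\wedge x_j)=Ax_1\wedge\cdots\wedge Ax_j$. An operator $C$ is $K$-nonnegative if $CK\subseteq K$, $K$-positive if $C(K\setminus\{0\})\subseteq\operatorname{int}K$. A totally positive structure is a family $\{K_1,\ldots,K_n\}$ with $K_j\subset\wedge^j\mathbb{R}^n$ a proper cone; $A$ is GTP (resp. GSTP) with respect to it if $\wedge^jA$ is $K_j$-nonnegative (resp. $K_j$-positive) for every $j=1,\ldots,n$. *)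

(* Defs.v *)
From HB Require Import structures.
From mathcomp Require Import all_boot all_order all_algebra.
From mathcomp Require Import all_classical all_reals all_analysis.
Set Implicit Arguments. Unset Strict Implicit. Unset Printing Implicit Defensive.
Import Order.TTheory GRing.Theory Num.Theory.
Import numFieldNormedType.Exports.
Local Open Scope classical_set_scope.
Local Open Scope ring_scope.

(** The basis of /\^j R^n is e_{i_1} /\ ... /\ e_{i_j}, i_1 < ... < i_j,
    indexed by the j-element subsets of 'I_n.  We index coordinates by
    [jset n j] and represent elements of /\^j R^n as column vectors
    'cV[R]_#|{: jset n j}| (coordinate p = coefficient of the basis vector
    indexed by enum_val p). *)
Definition jset (n j : nat) := {S : {set 'I_n} | #|S| == j}.

(** the a-th smallest element of the j-subset I *)
Definition jidx (n j : nat) (I : jset n j) (a : 'I_j) : 'I_n :=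
  @enum_val _ (mem (val I)) (cast_ord (esym (eqP (valP I))) a).

Notation wedge R n j := 'cV[R]_(#|{: jset n j}|).

(** The wedge x_1 /\ ... /\ x_j of vectors x : 'I_j -> R^n:
    its coordinates are the j x j minors (Plücker coordinates). *)
Definition wedge_vec (R : comPzRingType) (n j : nat) (x : 'I_j -> 'cV[R]_n)
  : 'cV[R]_(#|{: jset n j}|) :=
  \col_(p < #|{: jset n j}|) \det (\matrix_(a < j, b < j) x b (jidx (enum_val p) a) 0).

(** The j-th compound matrix: matrix of /\^j A in the above basis,
    entry (I,J) = det of the submatrix of A with rows I and columns J.
    (Cauchy–Binet: (/\^j A)(x_1 /\ ... /\ x_j) = A x_1 /\ ... /\ A x_j.) *)
Definition compound (R : comPzRingType) (n : nat) (A : 'M[R]_n) (j : nat)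
  : 'M[R]_(#|{: jset n j}|) :=
  \matrix_(p, q) \det (\matrix_(a < j, b < j)
      A (jidx (enum_val p) a) (jidx (enum_val q) b)).

Definition convex_cone (R : realType) (m : nat) (K : set 'cV[R]_m) : Prop :=
  K 0 /\ (forall x y, K x -> K y -> K (x + y)) /\
  (forall (c : R) x, 0 <= c -> K x -> K (c *: x)).

Definition pointed (R : realType) (m : nat) (K : set 'cV[R]_m) : Prop :=
  forall x, K x -> K (- x) -> x = 0.

Definition solid (R : realType) (m : nat) (K : set 'cV[R]_m) : Prop :=
  exists x, (interior K) x.

Definition proper_cone (R : realType) (m : nat) (K : set 'cV[R]_m) : Prop :=
  convex_cone K /\ closed K /\ pointed K /\ solid K.

Definition K_nonnegative (R : realType) (m : nat) (K : set 'cV[R]_m)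
  (C : 'M[R]_m) : Prop := forall x, K x -> K (C *m x).

Definition K_positive (R : realType) (m : nat) (K : set 'cV[R]_m)
  (C : 'M[R]_m) : Prop := forall x, K x -> x != 0 -> (interior K) (C *m x).

(** A totally positive structure {K_1,...,K_n}: K j is a proper cone in
    /\^j R^n for j = 1..n (values for j = 0 or j > n are irrelevant). *)
Definition TP_structure (R : realType) (n : nat)
  (K : forall j : nat, set (wedge R n j)) : Prop :=
  forall j, (0 < j <= n)%N -> proper_cone (K j).

Definition GTP (R : realType) (n : nat) (K : forall j : nat, set (wedge R n j))
  (A : 'M[R]_n) : Prop :=
  forall j, (0 < j <= n)%N -> K_nonnegative (K j) (compound A j).

Definition GSTP (R : realType) (n : nat) (K : forall j : nat, set (wedge R n j))
  (A : 'M[R]_n) : Prop :=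
  forall j, (0 < j <= n)%N -> K_positive (K j) (compound A j).

(* Main.v *)
Require Import Defs.
From HB Require Import structures.
From mathcomp Require Import all_boot all_order all_algebra.
From mathcomp Require Import all_classical all_reals all_analysis.
From mathcomp Require Import fingroup perm.
Import Order.TTheory GRing.Theory Num.Theory.
Import numFieldNormedType.Exports.
Local Open Scope ring_scope.

Section J.
Variables n j : nat.
Implicit Type S : jset n j.

Lemma jidx_in S a : jidx S a \in val S.
Proof. exact: (@enum_valP _ (mem (val S))). Qed.

Lemma jidx_inj S : injective (jidx S).
Proof. by move=> a b /enum_val_inj/cast_ord_inj. Qed.

Lemma jidx_onto S x : x \in val S -> exists a, jidx S a = x.
Proof.
move=> xS; exists (cast_ord (eqP (valP S)) (enum_rank_in xS x)).
by rewrite /jidx cast_ordK enum_rankK_in.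
Qed.

Lemma jidx_im S : [set jidx S a | a in 'I_j] = val S.
Proof.
apply/setP=> x; apply/imsetP/idP => [[a _ ->]|/jidx_onto[a <-]]; first exact: jidx_in.
by exists a.
Qed.
End J.

Section CB.
Variable R : comPzRingType.
Variables n j : nat.

Lemma det_expand (P : 'M[R]_(j,n)) (Q : 'M[R]_(n,j)) :
  \det (P *m Q) = \sum_(f : {ffun 'I_j -> 'I_n})
     (\prod_i P i (f i)) * \det (\matrix_(i, k) Q (f i) k).
Proof.
rewrite [in LHS]/determinant.
transitivity (\sum_(s : 'S_j) \sum_(f : {ffun 'I_j -> 'I_n})
   (-1) ^+ s * \prod_i (P i (f i) * Q (f i) (s i))).
  apply: eq_bigr => s _; rewrite -big_distrr /=; congr (_ * _).
  rewrite -(bigA_distr_bigA (fun i k => P i k * Q k (s i))) /=.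
  by apply: eq_bigr => i _; rewrite mxE.
rewrite exchange_big; apply: eq_bigr => f _ /=.
rewrite big_distrr /=; apply: eq_bigr => s _.
rewrite big_split /= mulrCA; congr (_ * (_ * _)).
by apply: eq_bigr => i _; rewrite mxE.
Qed.

End CB.

Section Bij.
Variable R : comPzRingType.
Variables n j : nat.

Definition phi (p : jset n j * 'S_j) : {ffun 'I_j -> 'I_n} :=
  [ffun i => jidx p.1 (p.2 i)].

Lemma phi_inj : injective phi.
Proof.
move=> [S t] [S' t'] E.
have E' a : jidx S (t a) = jidx S' (t' a).
  by move/ffunP: E => /(_ a); rewrite !ffunE.
have ES : S = S'.
  apply: val_inj; rewrite -!jidx_im.
  apply/setP=> x; apply/imsetP/imsetP => -[a _ ->].
    by exists (t' (t^-1 a))%g => //; rewrite -E' permKV.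
  by exists (t (t'^-1 a))%g => //; rewrite E' permKV.
subst S'; congr (_, _); apply/permP => a.
exact: jidx_inj (E' a).
Qed.

Lemma phi_im f : (f \in phi @: (@predT (jset n j * 'S_j))) = injectiveb f.
Proof.
apply/imsetP/injectiveP => [[[S t] _ ->] a b|finj].
  by rewrite !ffunE => /jidx_inj /perm_inj.
have cS : #|[set f a | a in 'I_j]| == j by rewrite card_imset // card_ord.
pose S : jset n j := exist (fun X : {set 'I_n} => #|X| == j) _ cS.
pose t0 a := odflt a [pick b | jidx S b == f a].
have t0E a : jidx S (t0 a) = f a.
  rewrite /t0; case: pickP => [b /eqP //|/= H].
  have : f a \in val S by apply/imsetP; exists a.
  by case/jidx_onto => b Eb; move: (H b); rewrite Eb eqxx.
have t0inj : injective t0.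
  by move=> a b Eab; apply: finj; rewrite -!t0E Eab.
exists (S, perm t0inj) => //; apply/ffunP => a /=.
by rewrite !ffunE permE t0E.
Qed.

Lemma sum_inj (G : {ffun 'I_j -> 'I_n} -> R) :
  \sum_(f : {ffun 'I_j -> 'I_n} | injectiveb f) G f =
  \sum_(S : jset n j) \sum_(t : 'S_j) G [ffun i => jidx S (t i)].
Proof.
rewrite pair_big /=.
transitivity (\sum_(f in phi @: (@predT (jset n j * 'S_j))) G f).
  by apply: eq_bigl => f; rewrite phi_im.
rewrite big_imset /=; last by move=> x y _ _; apply: phi_inj.
by apply: eq_bigl => p; rewrite inE.
Qed.

End Bij.

Section CB2.
Variable R : comPzRingType.
Variables n j : nat.

Lemma cauchy_binet (P : 'M[R]_(j,n)) (Q : 'M[R]_(n,j)) :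
  \det (P *m Q) = \sum_(S : jset n j)
    \det (\matrix_(a, b) P a (jidx S b)) * \det (\matrix_(a, b) Q (jidx S a) b).
Proof.
rewrite det_expand (bigID (fun f : {ffun 'I_j -> 'I_n} => injectiveb f)) /=.
rewrite [X in _ + X]big1 ?addr0; last first.
  move=> f /injectivePn [i1 [i2 Di12 Ef12]].
  by rewrite (determinant_alternate Di12) ?mulr0 // => k; rewrite !mxE Ef12.
rewrite sum_inj; apply: eq_bigr => S _.
set QS := \matrix_(a, b) Q (jidx S a) b.
transitivity (\sum_(t : 'S_j) ((-1) ^+ t * \prod_i P i (jidx S (t i))) * \det QS).
  apply: eq_bigr => t _.
  have -> : \matrix_(i, k) Q ([ffun i0 => jidx S (t i0)] i) k = row_perm t QS.
    by apply/matrixP => a b; rewrite !mxE ffunE.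
  rewrite row_permE det_mulmx det_perm mulrA [_ * (-1) ^+ _]mulrC.
  by congr (_ * _ * _); apply: eq_bigr => i _; rewrite ffunE.
rewrite -big_distrl /=; congr (_ * _).
by apply: eq_bigr => t _; congr (_ * _); apply: eq_bigr => i _; rewrite mxE.
Qed.

Lemma compoundM (A B : 'M[R]_n) :
  compound (A *m B) j = compound A j *m compound B j.
Proof.
apply/matrixP => p q; rewrite !mxE.
pose P := \matrix_(a < j, k < n) A (jidx (enum_val p) a) k.
pose Q := \matrix_(k < n, b < j) B k (jidx (enum_val q) b).
have -> : \matrix_(a < j, b < j) (A *m B) (jidx (enum_val p) a) (jidx (enum_val q) b)
   = P *m Q.
  apply/matrixP => a b; rewrite !mxE; apply: eq_bigr => k _; rewrite !mxE.
  by [].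
rewrite cauchy_binet (reindex (@enum_rank _)) /=; last first.
  by apply: onW_bij; apply: enum_rank_bij.
apply: eq_bigr => r _; rewrite !mxE enum_rankK; congr (_ * _);
  by congr (\det _); apply/matrixP => a b; rewrite !mxE.
Qed.

End CB2.

Section C1.
Variable R : comPzRingType.
Variables n j : nat.

Lemma det_row0 m (M : 'M[R]_m) a : (forall b, M a b = 0) -> \det M = 0.
Proof.
move=> Ma; apply: big1 => s _.
by rewrite (bigD1 a) //= Ma mul0r mulr0.
Qed.

Lemma compound1 : compound (1%:M : 'M[R]_n) j = 1%:M.
Proof.
apply/matrixP => p q; rewrite !mxE.
case: (eqVneq p q) => [<-|pq].
  rewrite (_ : \matrix_(a, b) _ = 1%:M) ?det1 //.
  by apply/matrixP => a b; rewrite !mxE (inj_eq (@jidx_inj _ _ _)).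
set I := enum_val p; set J := enum_val q.
have IJ : val I != val J.
  by apply: contra pq => /eqP /val_inj /enum_val_inj ->.
have cI : #|val I| = #|val J| by rewrite (eqP (valP I)) (eqP (valP J)).
have nsub : ~~ (val I \subset val J).
  by apply: contra IJ => sIJ; apply/eqP; apply/setP/subset_cardP.
case/subsetPn: nsub => x xI xJ.
case/jidx_onto: xI => a Ea.
apply: (@det_row0 _ _ a) => b; rewrite !mxE.
case: eqP => // E; exfalso; move: xJ; rewrite -Ea E.
by rewrite jidx_in.
Qed.

End C1.

Section Top.
Import numFieldNormedType.Exports.
Local Open Scope classical_set_scope.
Variable R : realType.
Variable m : nat.

Lemma mulmx_cont (D : 'M[R]_m) : continuous (fun z : 'cV[R]_m => D *m z).
Proof.
have -> : (fun z : 'cV[R]_m => D *m z) = (fun z => \sum_(k < m) z k 0 *: col k D).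
  apply: funext => z; apply/matrixP => i l; rewrite mxE summxE.
  by apply: eq_bigr => k _; rewrite !mxE (ord1 l) mulrC.
apply: continuous_big; first exact: add_continuous.
move=> k _ z; apply: continuousZr_tmp; exact: coord_continuous.
Qed.

Lemma int_map (K : set 'cV[R]_m) (C D : 'M[R]_m) :
  C *m D = 1%:M -> D *m C = 1%:M -> K_nonnegative K C ->
  forall y, interior K y -> interior K (C *m y).
Proof.
move=> CD DC KC y Ky.
have := mulmx_cont D (C *m y); rewrite /continuous_at mulmxA DC mul1mx => /(_ K Ky).
move=> H; have H2 : nbhs (C *m y) [set z | K (D *m z)] := H.
rewrite /interior /=; apply: filterS H2 => z /= Kz.
by rewrite -[z]mul1mx -CD -mulmxA; apply: KC.
Qed.

Lemma zero_notin_int (K : set 'cV[R]_m) (x : 'cV[R]_m) :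
  pointed K -> x != 0 -> ~ interior K 0.
Proof.
move=> pK x0 K0.
have K0' : nbhs ((0 : R) *: x) K by rewrite scale0r.
have [e /= e0 He] := @scalel_continuous _ _ x 0 K K0'.
have h1 : K ((e / 2) *: x).
  apply: (He _); rewrite /ball /= sub0r normrN ger0_norm ?ltr_pdivrMr ?divr_ge0 ?(ltW e0) //.
  by rewrite ltr_pMr // ltr1n.
have h2 : K (- ((e / 2) *: x)).
  rewrite -scaleNr; apply: (He _); rewrite /ball_ /= sub0r opprK.
  by rewrite ger0_norm ?ltr_pdivrMr ?divr_ge0 ?(ltW e0) // ltr_pMr // ltr1n.
have := pK _ h1 h2; move/eqP; rewrite scaler_eq0 (negPf x0) orbF.
by rewrite mulf_eq0 invr_eq0 pnatr_eq0 orbF (gt_eqF e0).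
Qed.

End Top.

Theorem proposition15 (R : realType) (n : nat)
  (K : forall j : nat, set (wedge R n j)) :
  TP_structure K ->
  (forall A B : 'M[R]_n, GTP K A -> GTP K B -> GTP K (A *m B)) /\
  (forall A B : 'M[R]_n, GTP K A -> GTP K B ->
      ((GSTP K A /\ B \in unitmx) \/ (A \in unitmx /\ GSTP K B)) ->
      GSTP K (A *m B)) /\
  (forall (A : 'M[R]_n) (m : nat), GTP K A -> GTP K (A ^+ m)) /\
  (forall (A : 'M[R]_n) (m : nat), (0 < m)%N -> GSTP K A -> GSTP K (A ^+ m)).
Proof.
move=> TP.
have GTPM : forall A B : 'M[R]_n, GTP K A -> GTP K B -> GTP K (A *m B).
  move=> A B hA hB j hj x Kx; rewrite compoundM -mulmxA.
  by apply: hA => //; apply: hB.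
have cunit : forall (A : 'M[R]_n) j, A \in unitmx ->
    compound A j *m compound (invmx A) j = 1%:M /\
    compound (invmx A) j *m compound A j = 1%:M.
  by move=> A j uA; rewrite -!compoundM mulmxV // mulVmx // compound1.
have intK : forall j (hj : (0 < j <= n)%N) (y : wedge R n j), interior (K j) y -> K j y.
  by move=> j hj y; apply: nbhs_singleton.
have nz : forall j (hj : (0 < j <= n)%N) (x : wedge R n j) y,
    x != 0 -> interior (K j) y -> y != 0.
  move=> j hj x y x0 Iy; apply/eqP => y0; subst y.
  have [_ [_ [pK _]]] := TP j hj.
  exact: (@zero_notin_int _ _ _ x pK x0 Iy).
have GSTPM : forall A B : 'M[R]_n, GSTP K A -> GSTP K B -> GSTP K (A *m B).
  move=> A B hA hB j hj x Kx x0; rewrite compoundM -mulmxA.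
  have Iy := hB j hj x Kx x0.
  by apply: hA => //; [apply: (intK _ hj _ Iy) | apply: (nz _ hj x _ x0 Iy)].
have GTP1 : GTP K 1%:M.
  by move=> j hj x Kx; rewrite compound1 mul1mx.
split; first exact: GTPM.
split.
  move=> A B hA hB [[sA uB]|[uA sB]] j hj x Kx x0; rewrite compoundM -mulmxA.
    apply: sA => //; first exact: hB.
    apply/eqP => y0; move/eqP: x0; apply.
    have [_ h] := cunit B j uB.
    by rewrite -[x]mul1mx -h -mulmxA y0 mulmx0.
  have [h1 h2] := cunit A j uA.
  apply: (@int_map _ _ _ _ _ h1 h2); first exact: hA.
  exact: sB.
split.
  move=> A m hA; elim: m => [|m IH]; first by rewrite expr0.
  by rewrite exprS; apply: (GTPM _ _ hA IH).
move=> A m m0 hA; elim: m m0 => [//|m IH _].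
case: m IH => [_|m IH]; first by rewrite expr1.
by rewrite exprS; apply: (GSTPM _ _ hA (IH isT)).
Qed.
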